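(* Let $\phi=(Q,\Sigma,\delta^\phi,q_0,Q\setminus\{q_{err}\})$ be a finite-state property and $R\subseteq\Sigma^*\times\Gamma$ a loss model. Define the NFA $\psi^*=(Q,\Gamma,\delta^{\psi^*},q_0,Q\setminus\{q_{err}\})$ by $$\delta^{\psi^*}(q,\gamma)=\delta^\phi(q,R^{-1}(\gamma))=\{\delta^\phi(q,s)\mid s\in\Sigma^*,\ sR\gamma\}\quad(q\in Q,\ \gamma\in\Gamma).$$ Then $\psi^*$ satisfies the superposed monitor condition and $L(\psi^* )=L_{opt}(\phi,R)$, where $L_{opt}(\phi,R)=\{y\in\Gamma^*\mid \mathcal{F}_R^{-1}(y)\cap L(\phi)\neq\emptyset\}$.
   Context: A finite-state property is a minimum-state DFA $\phi=(Q,\Sigma,\delta^\phi,q_0,Q\setminus\{q_{err}\})$ with designated trap error state $q_{err}$; $L(\phi)=\{x\mid\delta^\phi(q_0,x)\neq q_{err}\}$. $\delta^\phi$ is lifted to sets of states and sets of strings. A loss model is $R\subseteq\Sigma^*\times\Gamma$ with $\Gamma$ finite, and $R^{-1}(\gamma)=\{s\mid sR\gamma\}$. A filter under $R$ is determined by pairs $(s_1,\gamma_1),\dots,(s_m,\gamma_m)$ with $s_iR\gamma_i$ and a string $r\in\Sigma^*$; it maps each prefix $x$ of $s_1\cdots s_m r$ to $\gamma_1\cdots\gamma_j$ with $j$ maximal such that $s_1\cdots s_j$ is a prefix of $x$. $x\in\Sigma^*$ is a completion of $y\in\Gamma^*$ if some filter $f$ under $R$ has $f(x)=y$ and $f(x')\neq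 y$ for every proper prefix $x'$ of $x$; $\mathcal{F}_R^{-1}(y)$ is the set of completions. For an NFA $\psi=(Q,\Gamma,\delta^\psi,q_0,Q\setminus\{q_{err}\})$, $L(\psi)=\{y\mid\delta^\psi(\{q_0\},y)\cap(Q\setminus\{q_{err}\})\neq\emptyset\}$; it satisfies the superposed monitor condition if $\delta^\phi(q_0,x)\in\delta^\psi(\{q_0\},y)$ for all $y\in\Gamma^*$ and all $x\in\mathcal{F}_R^{-1}(y)$. *)

(* Defs.v *)
From mathcomp Require Import all_boot.
Set Implicit Arguments. Unset Strict Implicit. Unset Printing Implicit Defensive.

Section Defs.
Variables (Q Sigma Gamma : finType).

Definition dfa_run (delta : Q -> Sigma -> Q) (q : Q) (x : seq Sigma) : Q :=
  foldl delta q x.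

Definition dfa_lang (delta : Q -> Sigma -> Q) (q0 qerr : Q) (x : seq Sigma) : Prop :=
  dfa_run delta q0 x <> qerr.

(* Minimality: every state is reachable and
   any two distinct states are distinguishable. *)
Definition finite_state_property (delta : Q -> Sigma -> Q) (q0 qerr : Q) : Prop :=
  [/\ (forall a, delta qerr a = qerr),
      (forall q, exists x, dfa_run delta q0 x = q) &
      (forall p q, p <> q -> exists w,
          ~ ((dfa_run delta p w <> qerr) <-> (dfa_run delta q w <> qerr)))].

Definition loss_model := seq Sigma -> Gamma -> Prop.

(* The filter determined by pairs p = [(s_1,g_1);...;(s_m,g_m)] and string r:
   filter_maps p r x y  <->  x is a prefix of s_1...s_m r and f(x) = y, i.e.
   y = g_1...g_j with j maximal such that s_1...s_j is a prefix of x. *)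
Definition filter_maps (p : seq (seq Sigma * Gamma)) (r : seq Sigma)
    (x : seq Sigma) (y : seq Gamma) : Prop :=
  prefix x (flatten (map fst p) ++ r) /\
  exists j, [/\ j <= size p,
     prefix (flatten (map fst (take j p))) x,
     (forall k, j < k <= size p -> ~~ prefix (flatten (map fst (take k p))) x) &
     y = map snd (take j p)].

Definition filter_under (R : loss_model) (p : seq (seq Sigma * Gamma)) : Prop :=
  forall sg, sg \in p -> R sg.1 sg.2.

(* x is a completion of y, i.e. x ∈ F_R^{-1}(y). *)
Definition completion (R : loss_model) (x : seq Sigma) (y : seq Gamma) : Prop :=
  exists (p : seq (seq Sigma * Gamma)) (r : seq Sigma),
    [/\ filter_under R p,
        filter_maps p r x y &
        forall x', prefix x' x -> size x' < size x -> ~ filter_maps p r x' y].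

(* NFA over Γ with states Q: transition relation delta q g q' <-> q' ∈ delta(q,g). *)
Definition nfa_trans := Q -> Gamma -> Q -> Prop.

Fixpoint nfa_run (d : nfa_trans) (S : Q -> Prop) (y : seq Gamma) : Q -> Prop :=
  match y with
  | [::] => S
  | g :: y' => nfa_run d (fun q' => exists2 q, S q & d q g q') y'
  end.

Definition nfa_lang (d : nfa_trans) (q0 qerr : Q) (y : seq Gamma) : Prop :=
  exists2 q, nfa_run d (fun q => q = q0) y q & q <> qerr.

Definition superposed_monitor (delta : Q -> Sigma -> Q) (q0 : Q)
    (R : loss_model) (d : nfa_trans) : Prop :=
  forall (y : seq Gamma) (x : seq Sigma), completion R x y ->
    nfa_run d (fun q => q = q0) y (dfa_run delta q0 x).

Definition psi_star (delta : Q -> Sigma -> Q) (R : loss_model) : nfa_trans :=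
  fun q g q' => exists2 s, R s g & q' = dfa_run delta q s.

Definition L_opt (delta : Q -> Sigma -> Q) (q0 qerr : Q) (R : loss_model)
    (y : seq Gamma) : Prop :=
  exists2 x, completion R x y & dfa_lang delta q0 qerr x.

End Defs.

(* Main.v *)
Require Import Defs.
From mathcomp Require Import all_boot.

Section Aux.
Variables (Q Sigma Gamma : finType) (delta : Q -> Sigma -> Q) (R : loss_model Sigma Gamma).

Lemma run_path (S : Q -> Prop) (l : seq (seq Sigma * Gamma)) q :
  S q -> (forall sg, sg \in l -> R sg.1 sg.2) ->
  nfa_run (psi_star delta R) S (map snd l) (dfa_run delta q (flatten (map fst l))).
Proof.
elim: l S q => [|[s g] l IH] S q Sq Hl //=.
rewrite /dfa_run foldl_cat.
apply: (IH _ (dfa_run delta q s)).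
  exists q => //; exists s => //; exact: (Hl (s, g) (mem_head _ _)).
by move=> sg Hs; apply: Hl; rewrite in_cons Hs orbT.
Qed.

Lemma run_inv (S : Q -> Prop) (y : seq Gamma) q' :
  nfa_run (psi_star delta R) S y q' ->
  exists l : seq (seq Sigma * Gamma),
    [/\ map snd l = y, (forall sg, sg \in l -> R sg.1 sg.2) &
        exists2 q, S q & q' = dfa_run delta q (flatten (map fst l))].
Proof.
elim: y S => [|g y IH] S /=.
  by move=> Sq; exists [::]; split => //; exists q'.
move=> /IH [l [Hy Hl [q1 [q Sq [s Rs ->]] ->]]].
exists ((s, g) :: l); split => /=; first by rewrite Hy.
  move=> sg; rewrite in_cons => /orP [/eqP -> //|]; exact: Hl.
by exists q => //; rewrite /dfa_run foldl_cat.
Qed.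

Lemma completion_eq x y : completion R x y ->
  exists p : seq (seq Sigma * Gamma),
    [/\ filter_under R p, map snd p = y & x = flatten (map fst p)].
Proof.
move=> [p [r [Hp [Hpre [j [Hj Hx Hmax Hy]]]] Hmin]].
exists (take j p); split.
- by move=> sg /mem_take; apply: Hp.
- by [].
set a := flatten (map fst (take j p)).
have Ha : filter_maps p r a y.
  split; first exact: prefix_trans Hx Hpre.
  exists j; split => //; first exact: prefix_refl.
  move=> k Hk; apply/negP => Hka.
  by move: (Hmax k Hk); rewrite (prefix_trans Hka Hx).
have Hs := size_prefix Hx.
have Heq : size a = size x.
  apply/eqP; rewrite eqn_leq Hs /=; rewrite leqNgt; apply/negP => Hlt.
  exact: (Hmin a Hx Hlt Ha).
move: Hx; rewrite prefixE Heq take_size => /eqP ->; by [].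
Qed.

End Aux.

Theorem theorem3 (Q Sigma Gamma : finType) (delta : Q -> Sigma -> Q) (q0 qerr : Q)
    (R : loss_model Sigma Gamma) :
  finite_state_property delta q0 qerr ->
  superposed_monitor delta q0 R (psi_star delta R) /\
  (forall y : seq Gamma,
      nfa_lang (psi_star delta R) q0 qerr y <-> L_opt delta q0 qerr R y).
Proof.
move=> _.
have Hmon : superposed_monitor delta q0 R (psi_star delta R).
  move=> y x /completion_eq [p [Hp <- ->]].
  exact: run_path.
split => // y; split.
- move=> [q /run_inv [l [Hy Hl [q' -> ->]]] Hq].
  exists (flatten (map fst l)) => //.
  exists l, [::]; split => //.
  + split; first by rewrite cats0 prefix_refl.
    exists (size l); split => //; first by rewrite take_size prefix_refl.
      by move=> k /andP [H1 H2]; move: (leq_trans H1 H2); rewrite ltnn.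
    by rewrite take_size.
  + move=> x' Hx' Hlt [_ [j [Hj Hpx _ Hyj]]].
    have Hsj : j = size l.
      by move: (congr1 size Hyj); rewrite -Hy !size_map size_take_min; move/minn_idPl: Hj => ->.
    move: Hpx; rewrite Hsj take_size => /size_prefix.
    by rewrite leqNgt Hlt.
- move=> [x Hx Hl]; exists (dfa_run delta q0 x) => //; exact: Hmon.
Qed.
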